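(* Let $\Sigma=(\mathbf{x},\mathbf{F})$ be an LP seed of rank $n\ge2$ satisfying Condition 1.2. Then $$\mathrm{Im}(\varphi)=R[x_2,x_2^{(-)},\dots,x_n,x_n^{(-)}],\qquad\text{where } x_j^{(-)}=\begin{cases}x'_j,& \text{if } F_j \text{ does not involve } x_1,\\ x_j^{-1},&\text{otherwise.}\end{cases}$$
   Context: $R$ is a unique factorization domain containing $\mathbb{Z}$ and $\mathcal{F}$ is the field of rational functions in $n$ variables over $\mathrm{Frac}(R)$. An LP seed of rank $n$ is a pair $(\mathbf{x},\mathbf{F})$ where $\mathbf{x}=\{x_1,\dots,x_n\}$ is a transcendence basis of $\mathcal{F}$ over $\mathrm{Frac}(R)$ and $\mathbf{F}=\{F_1,\dots,F_n\}$ are irreducible polynomials in $R[x_1,\dots,x_n]$ with $x_j\nmid F_i$ for all $i,j$ and $F_i$ not involving $x_i$. The exchange Laurent polynomial is $\hat F_j=F_j/\prod_{k\neq j}x_k^{a_k}$, with $a_k\in\mathbb{Z}_{\ge0}$ maximal such that $F_k^{a_k}$ divides $F_j|_{x_k\leftarrow F_k/x'_k}$ in $R[x_1,\dots,x_{k-1},(x'_k)^{-1},x_{k+1},\dots,x_n]$. Set $x'_j=\hat F_j/x_j$. Lexicographic order on $\mathbb{Z}^n$: $\mathbf{a}\prec\mathbf{a}'$ if the first nonzero entry of $\mathbf{a}'-\mathbf{a}$ is positive; the lexicographically first monomial of a polynomial is its term with $\prec$-smallest exponent vector. Condition 1.2: for every $k\in[1,n]$, with $M_k$ the lexicographically first monomial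 of $F_k$: (i) $\hat F_k=F_k$; (ii) $M_k=x_{k+1}^{v_{k+1,k}}\cdots x_n^{v_{n,k}}$ (coefficient $1$) with $v_{\cdot,k}\in\mathbb{Z}_{\ge0}$ for $k\in[1,n-1]$, and $M_n=1$; (iii) if $k\ne1$ and $F_k$ involves $x_1$, then every monomial of $F_k-M_k$ is divisible by $x_1$; (iv) if $k\notin\{1,2\}$, $F_k$ does not involve $x_1$, and there is $i\in[2,k-1]$ such that $x_k$ divides $M_i$, then every monomial of $F_k-M_k$ is divisible by $x_i$. Under (i), $R[x_2,x'_2,\dots,x_n,x'_n]\subseteq R[x_1,x_2^{\pm1},\dots,x_n^{\pm1}]$; $\varphi:R[x_2,x'_2,\dots,x_n,x'_n]\to R[x_2^{\pm1},\dots,x_n^{\pm1}]$ is the restriction of the $R$-algebra homomorphism $R[x_1,x_2^{\pm1},\dots,x_n^{\pm1}]\to R[x_2^{\pm1},\dots,x_n^{\pm1}]$ sending $x_1\mapsto0$, $x_i^{\pm1}\mapsto x_i^{\pm1}$ ($i\ge2$). *)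

(* Defs.v *)
From HB Require Import structures.
From mathcomp Require Import all_boot all_order all_algebra.
From mathcomp Require Import fraction.
From mathcomp Require Import mpoly.
From Stdlib Require Import ClassicalEpsilon.

Set Implicit Arguments.
Unset Strict Implicit.
Unset Printing Implicit Defensive.
Import GRing.Theory.
Local Open Scope ring_scope.

Definition dvdR (T : comUnitRingType) (a b : T) : Prop := exists c : T, b = c * a.

Definition irredR (T : comUnitRingType) (p : T) : Prop :=
  p != 0 /\ p \isn't a GRing.unit /\
  (forall a b : T, p = a * b -> a \is a GRing.unit \/ b \is a GRing.unit).

Definition primeR (T : comUnitRingType) (p : T) : Prop :=
  p != 0 /\ p \isn't a GRing.unit /\
  (forall a b : T, dvdR p (a * b) -> dvdR p a \/ dvdR p b).

(* Unique factorization domain: every nonzero nonunit is a product of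
   irreducibles, and irreducibles are prime (equivalently: the factorization
   is unique up to order and units). *)
Definition UFD (T : idomainType) : Prop :=
  (forall x : T, x != 0 -> x \isn't a GRing.unit ->
     exists s : seq T, (forall y, y \in s -> irredR y) /\ x = \prod_(y <- s) y)
  /\ (forall p : T, irredR p -> primeR p).

Definition contains_Z (T : idomainType) : Prop :=
  forall z : int, z%:~R = 0 :> T -> z = 0.

Section LP.
Variables (R : idomainType) (n : nat).
Local Notation P := {mpoly R[n]}.
(* F is the field of rational functions: Frac(R[x_1..x_n]) = Frac(R)(x_1..x_n) *)
Local Notation K := {fraction P}.

Definition involves (F : P) (i : 'I_n) : bool :=
  has (fun m : 'X_{1..n} => (0 < m i)%N) (msupp F).

Definition involves1 (F : P) : bool := [exists i : 'I_n, (val i == 0%N) && involves F i].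

Definition x1divm (m : 'X_{1..n}) : Prop := forall i : 'I_n, val i = 0%N -> (0 < m i)%N.

Definition lexlt (m m' : 'X_{1..n}) : Prop :=
  exists i : 'I_n, (forall l : 'I_n, (l < i)%N -> m l = m' l) /\ (m i < m' i)%N.

Definition lexfirst (F : P) (m : 'X_{1..n}) : Prop :=
  m \in msupp F /\ forall m', m' \in msupp F -> m' != m -> lexlt m m'.

Definition LP_seed (Fs : 'I_n -> P) : Prop :=
  forall i : 'I_n,
    irredR (Fs i) /\ (forall j : 'I_n, ~ dvdR ('X_j : P) (Fs i)) /\ ~~ involves (Fs i) i.

Definition xK (i : 'I_n) : K := tofrac ('X_i : P).
Definition iR (c : R) : K := tofrac (c%:MP : P).

(* F_j|_{x_k <- F_k / x'_k}, written as a polynomial in the variables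
   x_l (l <> k) and y = (x'_k)^{-1}, where y is stored in slot k. *)
Definition subst_exch (Fs : 'I_n -> P) (j k : 'I_n) : P :=
  Fs j \mPo [tuple (if i == k then Fs k * 'X_k else 'X_i) | i < n].

Definition is_exch_exp (Fs : 'I_n -> P) (j k : 'I_n) (a : nat) : Prop :=
  dvdR (Fs k ^+ a) (subst_exch Fs j k) /\ ~ dvdR (Fs k ^+ a.+1) (subst_exch Fs j k).

Definition exch_exp (Fs : 'I_n -> P) (j k : 'I_n) : nat :=
  epsilon (inhabits 0%N) (is_exch_exp Fs j k).

Definition hatF (Fs : 'I_n -> P) (j : 'I_n) : K :=
  tofrac (Fs j) / \prod_(k < n | k != j) xK k ^+ exch_exp Fs j k.

Definition xpK (Fs : 'I_n -> P) (j : 'I_n) : K := hatF Fs j / xK j.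

(* Condition 1.2 (0-based: index k stands for x_{k+1}) *)
Definition cond12 (Fs : 'I_n -> P) : Prop :=
  forall k : 'I_n,
    hatF Fs k = tofrac (Fs k) /\
    exists m : 'X_{1..n},
      lexfirst (Fs k) m /\
      (Fs k)@_m = 1 /\ (forall i : 'I_n, (i <= k)%N -> m i = 0%N) /\
      ((k != 0 :> nat) -> involves1 (Fs k) ->
         forall m', m' \in msupp (Fs k - 'X_[m]) -> x1divm m') /\
      ((2 <= k)%N ->
         ~~ involves1 (Fs k) ->
         forall i : 'I_n, (1 <= i < k)%N ->
         forall mi, lexfirst (Fs i) mi -> (0 < mi k)%N ->
         forall m', m' \in msupp (Fs k - 'X_[m]) -> (0 < m' i)%N).

Definition subalg (gs : seq K) (z : K) : Prop :=
  exists p : {mpoly R[size gs]}, z = mmap iR (fun i => gs`_i) p.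

(* graph of phi : R[x_1, x_2^{+-1},..,x_n^{+-1}] -> R[x_2^{+-1},..,x_n^{+-1}],
   x_1 |-> 0: an element P / x^e (e_1 = 0) is sent to P|_{x_1=0} / x^e *)
Definition zero1 : n.-tuple P := [tuple (if i == 0 :> nat then 0 else 'X_i) | i < n].

Definition phi_graph (z w : K) : Prop :=
  exists (Q : P) (e : 'X_{1..n}),
    (forall i : 'I_n, (i == 0 :> nat) -> e i = 0%N) /\
    z = tofrac Q / tofrac ('X_[e] : P) /\
    w = tofrac (Q \mPo zero1) / tofrac ('X_[e] : P).

Definition gens_src (Fs : 'I_n -> P) : seq K :=
  flatten [seq [:: xK j; xpK Fs j] | j : 'I_n <- enum 'I_n & (0 < val j)%N].

Definition xminus (Fs : 'I_n -> P) (j : 'I_n) : K :=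
  if involves1 (Fs j) then (xK j)^-1
  else xpK Fs j.

Definition gens_tgt (Fs : 'I_n -> P) : seq K :=
  flatten [seq [:: xK j; xminus Fs j] | j : 'I_n <- enum 'I_n & (0 < val j)%N].

End LP.

(* Main.v *)
Require Import Defs.
From HB Require Import structures.
From mathcomp Require Import all_boot all_order all_algebra.
From mathcomp Require Import fraction.
From mathcomp Require Import mpoly.
From mathcomp Require Import ring zify.
Set Implicit Arguments. Unset Strict Implicit. Unset Printing Implicit Defensive.
Import GRing.Theory.
Local Open Scope ring_scope.

Section Sub.
Variables (R : idomainType) (n : nat).
Local Notation P := {mpoly R[n]}.
Local Notation K := {fraction P}.

Definition cR : {rmorphism R -> K} := (@tofrac P \o (@mpolyC n R)).

Lemma iRE c : iR n c = cR c. Proof. by []. Qed.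

Lemma mmap_iR k (h : 'I_k -> K) (p : {mpoly R[k]}) : mmap (iR n) h p = mmap cR h p.
Proof. by rewrite /mmap; apply: eq_bigr => m _; rewrite iRE. Qed.

Lemma subal_ind (gs : seq K) (S : K -> Prop) :
  (forall c, S (iR n c)) -> (forall a b, S a -> S b -> S (a + b)) ->
  (forall a b, S a -> S b -> S (a * b)) -> (forall i, (i < size gs)%N -> S gs`_i) ->
  forall z, subalg gs z -> S z.
Proof.
move=> Sc SD SM Sg z [p zE]; rewrite {}zE.
have S0 : S 0 by have := Sc 0; rewrite iRE rmorph0.
have S1 : S 1 by have := Sc 1; rewrite iRE rmorph1.
rewrite /mmap; apply: big_ind; [exact: S0 | exact: (SD) | move=> m _].
apply: (SM); first by apply: (Sc).
rewrite /mmap1; apply: big_ind; [exact: S1 | exact: (SM) | move=> i _].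
elim: (m i) => [|k IH]; first by rewrite expr0.
by rewrite exprS; apply: (SM) => //; apply: (Sg).
Qed.

Lemma subal_c (gs : seq K) c : subalg gs (iR n c).
Proof. by exists c%:MP; rewrite mmap_iR mmapC. Qed.
Lemma subal_D (gs : seq K) a b : subalg gs a -> subalg gs b -> subalg gs (a + b).
Proof. by move=> [p ->] [q ->]; exists (p + q); rewrite !mmap_iR mmapD. Qed.
Lemma subal_M (gs : seq K) a b : subalg gs a -> subalg gs b -> subalg gs (a * b).
Proof. by move=> [p ->] [q ->]; exists (p * q); rewrite !mmap_iR rmorphM. Qed.
Lemma subal_g (gs : seq K) i : (i < size gs)%N -> subalg gs gs`_i.
Proof.
move=> lt; exists ('X_(Ordinal lt)); rewrite mmap_iR mmapX mmap1U //.
Qed.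
Lemma subal_in (gs : seq K) a : a \in gs -> subalg gs a.
Proof. by move=> ain; rewrite -(nth_index 0 ain); apply: subal_g; rewrite index_mem. Qed.
End Sub.
Section Phi.
Variables (R : idomainType) (n : nat).
Local Notation P := {mpoly R[n]}.
Local Notation K := {fraction P}.
Local Notation z1 := (zero1 R n).

Definition nox1 (m : 'X_{1..n}) := forall i : 'I_n, val i = 0%N -> m i = 0%N.

Lemma X_neq0 (m : 'X_{1..n}) : 'X_[m] != 0 :> P.
Proof. apply/eqP => h; have := mcoeffX R m m; rewrite h mcoeff0 eqxx => /esym/eqP; by rewrite oner_eq0. Qed.

Lemma tX_neq0 (m : 'X_{1..n}) : tofrac ('X_[m] : P) != 0.
Proof. by rewrite tofrac_eq0 X_neq0. Qed.

Lemma compX0 m : nox1 m -> 'X_[m] \mPo z1 = 'X_[m].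
Proof.
move=> hm; rewrite comp_mpolyX [RHS]mpolyXE_id; apply: eq_bigr => i _.
rewrite tnth_mktuple; case: ifP => // /eqP /hm ->; by rewrite !expr0.
Qed.

Lemma compX1 m : x1divm m -> (exists i : 'I_n, val i = 0%N) -> 'X_[m] \mPo z1 = 0.
Proof.
move=> hm [i0 hi0]; rewrite comp_mpolyX (bigD1 i0) //= tnth_mktuple hi0 eqxx.
by rewrite expr0n (gtn_eqF (hm _ hi0)) mul0r.
Qed.

Lemma comp_nox1 (h : P) : (forall m, m \in msupp h -> nox1 m) -> h \mPo z1 = h.
Proof.
move=> hh; rewrite {1}[h]mpolyE raddf_sum /= [RHS]mpolyE; apply: eq_big_seq => m hm.
by rewrite comp_mpolyZ compX0 //; apply: hh.
Qed.

Lemma comp_x1 (h : P) : (forall m, m \in msupp h -> x1divm m) -> (exists i : 'I_n, val i = 0%N) ->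
  h \mPo z1 = 0.
Proof.
move=> hh e; rewrite {1}[h]mpolyE raddf_sum /= big1_seq // => m hm.
by rewrite comp_mpolyZ compX1 ?scaler0 //; apply: hh.
Qed.

Lemma nox1D (a b : 'X_{1..n}) : nox1 a -> nox1 b -> nox1 (a + b).
Proof. by move=> ha hb i hi; rewrite mnmDE ha // hb. Qed.

Lemma phiD (z w z' w' : K) : phi_graph z w -> phi_graph z' w' -> phi_graph (z + z') (w + w').
Proof.
move=> [Q [e [he [-> ->]]]] [Q' [e' [he' [-> ->]]]].
exists (Q * 'X_[e'] + Q' * 'X_[e]), (e + e')%MM; split; first by move=> i hi; rewrite mnmDE he ?he'.
have ne := tX_neq0 e; have ne' := tX_neq0 e'.
have c0 : 'X_[e] \mPo z1 = 'X_[e] by apply: compX0 => i /eqP; apply: he.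
have c0' : 'X_[e'] \mPo z1 = 'X_[e'] by apply: compX0 => i /eqP; apply: he'.
rewrite (addf_div _ _ ne ne') (addf_div _ _ ne ne') mpolyXD.
rewrite [(_ + _) \mPo _]rmorphD /= [(Q * _) \mPo _]rmorphM /= [(Q' * _) \mPo _]rmorphM /= c0 c0'.
by rewrite !rmorphD /= !rmorphM.
Qed.

Lemma phiM (z w z' w' : K) : phi_graph z w -> phi_graph z' w' -> phi_graph (z * z') (w * w').
Proof.
move=> [Q [e [he [-> ->]]]] [Q' [e' [he' [-> ->]]]].
exists (Q * Q'), (e + e')%MM; split; first by move=> i hi; rewrite mnmDE he ?he'.
rewrite !mulf_div mpolyXD [(Q * Q') \mPo _]rmorphM /=.
by rewrite !rmorphM.
Qed.

Lemma phi_id (h : P) : (forall m, m \in msupp h -> nox1 m) -> phi_graph (tofrac h) (tofrac h).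
Proof.
move=> hh; exists h, 0%MM; split; first by move=> i _; rewrite mnm0E.
by rewrite mpolyX0 rmorph1 !divr1 (comp_nox1 hh).
Qed.

Lemma phi_uniq (z w w' : K) : phi_graph z w -> phi_graph z w' -> w = w'.
Proof.
move=> [Q [e [he [-> ->]]]] [Q' [e' [he' [E ->]]]].
have ne := tX_neq0 e; have ne' := tX_neq0 e'.
have c0 : 'X_[e] \mPo z1 = 'X_[e] by apply: compX0 => i /eqP; apply: he.
have c0' : 'X_[e'] \mPo z1 = 'X_[e'] by apply: compX0 => i /eqP; apply: he'.
move/eqP: E; rewrite (eqr_div _ _ ne ne') -!rmorphM /= tofrac_eq => /eqP /(congr1 (comp_mpoly z1)).
rewrite (rmorphM _ Q) (rmorphM _ Q') /= c0 c0' => H2.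
by apply/eqP; rewrite (eqr_div _ _ ne ne') -!rmorphM /= H2.
Qed.
End Phi.

Section Main.
Variables (R : idomainType) (n : nat) (Fs : 'I_n -> {mpoly R[n]}).
Hypothesis hn : (2 <= n)%N.
Hypothesis hc : cond12 Fs.
Local Notation P := {mpoly R[n]}.
Local Notation K := {fraction P}.
Local Notation z1 := (zero1 R n).

Lemma hn0 : (0 < n)%N. Proof. exact: leq_trans hn. Qed.
Definition i0 : 'I_n := Ordinal hn0.
Lemma ex0 : exists i : 'I_n, val i = 0%N. Proof. by exists i0. Qed.

Definition closedS (S : K -> Prop) :=
  [/\ forall c, S (iR n c), forall a b, S a -> S b -> S (a + b) &
      forall a b, S a -> S b -> S (a * b)].

Lemma monoS S : closedS S -> (forall i : 'I_n, (0 < val i)%N -> S (xK R i)) ->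
  forall m : 'X_{1..n}, nox1 m -> S (tofrac ('X_[m] : P)).
Proof.
move=> [Sc SD SM] Sx m hm.
have S1 : S 1 by have := Sc 1; rewrite iRE rmorph1.
rewrite mpolyXE_id rmorph_prod; apply: big_ind; [exact: S1 | exact: SM | move=> i _].
case: (posnP (val i)) => [/hm -> | ip]; first by rewrite expr0 rmorph1.
rewrite rmorphXn; elim: (m i) => [|k IH]; first by rewrite expr0.
by rewrite exprS; apply: SM => //; apply: Sx.
Qed.

Lemma polyS S : closedS S -> (forall i : 'I_n, (0 < val i)%N -> S (xK R i)) ->
  forall h : P, (forall m, m \in msupp h -> nox1 m) -> S (tofrac h).
Proof.
move=> cS Sx h hh; have [Sc SD SM] := cS.
have S0 : S 0 by have := Sc 0; rewrite iRE rmorph0.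
rewrite [h]mpolyE rmorph_sum big_seq; apply: big_ind; [exact: S0 | exact: SD | move=> m hm].
rewrite -mul_mpolyC rmorphM; apply: SM; first exact: Sc.
exact: (monoS cS Sx (hh _ hm)).
Qed.

Lemma noinv_nox1 (F : P) : ~~ involves1 F -> forall m, m \in msupp F -> nox1 m.
Proof.
move=> hF m hm i hi; apply/eqP; rewrite eqn0Ngt; apply/negP => mp.
move/negP: hF; apply; apply/existsP; exists i; rewrite hi eqxx /=.
by apply/hasP; exists m.
Qed.

Lemma nox1U (j : 'I_n) : (0 < val j)%N -> nox1 U_(j).
Proof. by move=> jp i hi; rewrite mnm1E; case: eqP => // E; move: jp; rewrite E hi. Qed.

Lemma xK_neq0 (j : 'I_n) : xK R j != 0.
Proof. exact: tX_neq0. Qed.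

Lemma xpKE (j : 'I_n) : xpK Fs j = tofrac (Fs j) / xK R j.
Proof. by rewrite /xpK; have [-> _] := hc j. Qed.

Lemma mem_src (j : 'I_n) : (0 < val j)%N ->
  xK R j \in gens_src Fs /\ xpK Fs j \in gens_src Fs.
Proof.
move=> jp; have H : [:: xK R j; xpK Fs j] \in
   [seq [:: xK R j0; xpK Fs j0] | j0 : 'I_n <- enum 'I_n & (0 < val j0)%N].
  by apply/mapP; exists j => //; rewrite mem_filter jp mem_enum.
by split; apply/flattenP; exists [:: xK R j; xpK Fs j] => //; rewrite !inE eqxx ?orbT.
Qed.

Lemma mem_tgtx (j : 'I_n) : (0 < val j)%N -> xK R j \in gens_tgt Fs.
Proof.
move=> jp; have H : [:: xK R j; xminus Fs j] \in
   [seq [:: xK R j0; xminus Fs j0] | j0 : 'I_n <- enum 'I_n & (0 < val j0)%N].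
  by apply/mapP; exists j => //; rewrite mem_filter jp mem_enum.
by apply/flattenP; exists [:: xK R j; xminus Fs j] => //; rewrite !inE eqxx ?orbT.
Qed.

Lemma mem_tgtm (j : 'I_n) : (0 < val j)%N -> xminus Fs j \in gens_tgt Fs.
Proof.
move=> jp; have H : [:: xK R j; xminus Fs j] \in
   [seq [:: xK R j0; xminus Fs j0] | j0 : 'I_n <- enum 'I_n & (0 < val j0)%N].
  by apply/mapP; exists j => //; rewrite mem_filter jp mem_enum.
by apply/flattenP; exists [:: xK R j; xminus Fs j] => //; rewrite !inE eqxx ?orbT.
Qed.

Lemma src_inv a : a \in gens_src Fs -> exists j : 'I_n, (0 < val j)%N /\ (a = xK R j \/ a = xpK Fs j).
Proof.
move/flattenP => [s /mapP [j]]; rewrite mem_filter mem_enum andbT => jp -> /=.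
by rewrite !inE => /orP [/eqP -> | /eqP ->]; exists j; auto.
Qed.

Lemma tgt_inv a : a \in gens_tgt Fs -> exists j : 'I_n, (0 < val j)%N /\ (a = xK R j \/ a = xminus Fs j).
Proof.
move/flattenP => [s /mapP [j]]; rewrite mem_filter mem_enum andbT => jp -> /=.
by rewrite !inE => /orP [/eqP -> | /eqP ->]; exists j; auto.
Qed.

Lemma phi_x (j : 'I_n) : (0 < val j)%N -> phi_graph (xK R j) (xK R j).
Proof. by move=> jp; apply: phi_id => m; rewrite msuppX inE => /eqP ->; apply: nox1U. Qed.

Lemma phi_c (c : R) : phi_graph (iR n c) (iR n c).
Proof.
apply: phi_id => m; rewrite msuppC; case: (c == 0) => //.
by rewrite inE => /eqP -> i _; rewrite mnm0E.
Qed.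

Lemma phi_xp_noinv (j : 'I_n) : (0 < val j)%N -> ~~ involves1 (Fs j) ->
  phi_graph (xpK Fs j) (xpK Fs j).
Proof.
move=> jp hF; rewrite xpKE; exists (Fs j), U_(j)%MM; split.
  by move=> i /eqP; apply: nox1U.
by rewrite comp_nox1 //; apply: noinv_nox1.
Qed.

Lemma phi_xp_inv (j : 'I_n) : (0 < val j)%N -> involves1 (Fs j) ->
  exists m : 'X_{1..n}, lexfirst (Fs j) m /\ (forall i : 'I_n, (i <= j)%N -> m i = 0%N) /\
  phi_graph (xpK Fs j) (tofrac ('X_[m] : P) / xK R j).
Proof.
move=> jp hF; have [_ [m [lf [_ [mz [hiii _]]]]]] := hc j.
exists m; split => //; split => //.
rewrite xpKE; exists (Fs j), U_(j)%MM; split.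
  by move=> i /eqP; apply: nox1U.
split => //.
have -> : Fs j = 'X_[m] + (Fs j - 'X_[m]) by rewrite addrC subrK.
rewrite rmorphD /= compX0; last by move=> i hi; apply: mz; rewrite hi.
rewrite (comp_x1 (h := Fs j - 'X_[m])) ?addr0 //; last exact: ex0.
move=> mm hmm; apply: (hiii _ hF) => //; by rewrite -lt0n.
Qed.


Definition B (w : K) := exists z, subalg (gens_src Fs) z /\ phi_graph z w.

Lemma B_closed : closedS B.
Proof.
split.
- by move=> c; exists (iR n c); split; [apply: subal_c | apply: phi_c].
- by move=> a b [z [sz pz]] [z' [sz' pz']]; exists (z + z'); split; [apply: subal_D | apply: phiD].
- by move=> a b [z [sz pz]] [z' [sz' pz']]; exists (z * z'); split; [apply: subal_M | apply: phiM].
Qed.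

Lemma Bx (j : 'I_n) : (0 < val j)%N -> B (xK R j).
Proof. by move=> jp; exists (xK R j); split; [apply: subal_in; case: (mem_src jp) | apply: phi_x]. Qed.

Lemma Bxp (j : 'I_n) : (0 < val j)%N -> ~~ involves1 (Fs j) -> B (xpK Fs j).
Proof. by move=> jp hF; exists (xpK Fs j); split; [apply: subal_in; case: (mem_src jp) | apply: phi_xp_noinv]. Qed.

Lemma BD a b : B a -> B b -> B (a + b). Proof. by case: B_closed => _ H _; apply: H. Qed.
Lemma BM a b : B a -> B b -> B (a * b). Proof. by case: B_closed => _ _ H; apply: H. Qed.
Lemma B0 : B 0. Proof. by case: B_closed => Sc _ _; have := Sc 0; rewrite iRE rmorph0. Qed.
Lemma Bc (c : R) : B (iR n c). Proof. by case: B_closed => H _ _; apply: H. Qed.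
Lemma BN a : B a -> B (- a).
Proof. by move=> Ba; rewrite -mulN1r; apply: BM => //; have := Bc (-1); rewrite iRE rmorphN1. Qed.
Lemma BB a b : B a -> B b -> B (a - b). Proof. by move=> Ba Bb; apply: BD => //; apply: BN. Qed.
Lemma Bpoly (h : P) : (forall m, m \in msupp h -> nox1 m) -> B (tofrac h).
Proof. by apply: polyS; [apply: B_closed | apply: Bx]. Qed.
Lemma Bmono (m : 'X_{1..n}) : nox1 m -> B (tofrac ('X_[m] : P)).
Proof. by apply: monoS; [apply: B_closed | apply: Bx]. Qed.

Lemma mnm_split (e : 'X_{1..n}) (p : 'I_n) : (0 < e p)%N -> e = ((e - U_(p)) + U_(p))%MM.
Proof.
move=> ep; apply/mnmP => i; rewrite mnmDE mnmBE mnm1E.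
case: eqP => [<-|_]; last by rewrite subn0 addn0.
by rewrite subnK.
Qed.

Lemma exists_pos (e : 'X_{1..n}) : mdeg e != 0%N -> exists p : 'I_n, (0 < e p)%N.
Proof.
move=> ne; case: (pickP (fun p : 'I_n => 0 < e p)%N) => [p hp|H]; first by exists p.
move: ne; rewrite mdeg_eq0 => /negP []; apply/eqP/mnmP => i; rewrite mnm0E.
by move: (H i) => /negbT; rewrite -eqn0Ngt => /eqP.
Qed.

Lemma hard (j : 'I_n) : (0 < val j)%N -> involves1 (Fs j) -> B (xK R j)^-1.
Proof.
move: j; suff: forall d (j : 'I_n), (n - j <= d)%N -> (0 < val j)%N -> involves1 (Fs j) -> B (xK R j)^-1.
  by move=> H j; apply: (H n) ; rewrite leq_subr.
elim=> [|d IHd] j hd jp hF.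
  by move: hd (ltn_ord j); lia.
set u := (xK R j)^-1.
have jp' : (0 < j)%N := jp.
have IHY : forall p : 'I_n, (j < p)%N -> involves1 (Fs p) -> B (xK R p)^-1.
  by move=> p jlp hFp; apply: (IHd) => //; [lia | change (0 < p)%N; lia].
pose Kst (l : 'I_n) := forall m : 'X_{1..n}, lexfirst (Fs l) m -> (forall i : 'I_n, (i <= l)%N -> m i = 0%N) ->
  forall g, B (g * tofrac ('X_[m] : P) * u) -> B (g * xK R l * u) -> B (g * u).
have KK : forall d' (l : 'I_n), (n - l <= d')%N -> (j <= l)%N -> Kst l.
  elim=> [|d' IHd'] l hd' jl.
    by move: hd' (ltn_ord l); lia.
  move=> m lfm mz g Hm Hl.
  suff peel : forall k (e : 'X_{1..n}), mdeg e = k -> (forall i, e i <= m i)%N ->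
      B (g * tofrac ('X_[e] : P) * u) -> B (g * u).
    by apply: (peel _ m erefl) => // i.
  elim=> [|k IHk] e de em Be.
    by move/eqP: de; rewrite mdeg_eq0 => /eqP de; move: Be; rewrite de mpolyX0 rmorph1 mulr1.
  have [p ep] : exists p : 'I_n, (0 < e p)%N by apply: exists_pos; rewrite de.
  set e' := (e - U_(p))%MM.
  have ee := mnm_split ep.
  have de' : mdeg e' = k by move: de; rewrite ee mdegD mdeg1 addn1 => [[]].
  have e'm : forall i, (e' i <= m i)%N by move=> i; rewrite mnmBE; apply: leq_trans (leq_subr _ _) (em i).
  apply: (IHk e' de' e'm).
  set g' := g * tofrac ('X_[e'] : P).
  have mp : (0 < m p)%N by apply: leq_trans ep (em p).
  have lp : (l < p)%N by rewrite ltnNge; apply/negP => /mz; move: mp => /[swap] ->.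
  have pp : (0 < val p)%N by change (0 < p)%N; lia.
  have Bg'p : B (g' * xK R p * u).
    by move: Be; rewrite ee mpolyXD rmorphM /g' /xK !mulrA.
  have xp0 := xK_neq0 p.
  case: (boolP (involves1 (Fs p))) => hFp.
    have : B (g' * xK R p * u * (xK R p)^-1) by apply: BM => //; apply: IHY => //; lia.
    by rewrite mulrAC -(mulrA g') mulfV // mulr1.
  have [_ [mp' [lfp [cp [mpz [_ hiv]]]]]] := hc p.
  have hD : forall m', m' \in msupp (Fs p - 'X_[mp']) -> (0 < m' l)%N.
    move=> m' hm'; apply: (hiv _ hFp l _ m lfm mp m' hm'); [lia | apply/andP; split => //; lia].
  have nD : forall m', m' \in msupp (Fs p - 'X_[mp']) -> nox1 m'.
    move=> m' /msuppB_le; rewrite mem_cat => /orP [hm'|]; first exact: (noinv_nox1 hFp).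
    by rewrite msuppX inE => /eqP -> i hi; apply: mpz; rewrite hi.
  have BF : B (g' * tofrac (Fs p) * u).
    have : B (g' * xK R p * u * xpK Fs p) by apply: BM => //; apply: Bxp.
    rewrite xpKE; have -> : g' * xK R p * u * (tofrac (Fs p) / xK R p) = g' * tofrac (Fs p) * u * (xK R p * (xK R p)^-1) by ring.
    by rewrite mulfV // mulr1.
  have BDp : B (g' * tofrac (Fs p - 'X_[mp']) * u).
    set D := Fs p - 'X_[mp'].
    rewrite [D]mpolyE rmorph_sum big_seq mulr_sumr mulr_suml.
    apply: big_ind; [exact: B0 | exact: BD | move=> m' hm'].
    have lm' := hD _ hm'; have em' := mnm_split lm'.
    set m'' := (m' - U_(l))%MM in em'.
    have XE : 'X_[m'] = 'X_[m''] * 'X_[U_(l)] :> P by rewrite -mpolyXD -em'.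
    rewrite -mul_mpolyC XE !rmorphM /=.
    have -> : g' * (tofrac ((D@_m')%:MP) * (tofrac ('X_[m''] : P) * tofrac ('X_[U_(l)] : P))) * u =
      iR n (D@_m') * ((g * xK R l * u) * tofrac ('X_[e'] : P) * tofrac ('X_[m''] : P)).
      by rewrite /g' /iR /xK; ring.
    apply: BM; first exact: Bc.
    apply: BM; last by apply: Bmono => i hi; rewrite /m'' mnmBE (nD _ hm').
    apply: BM => //; apply: Bmono => i hi.
    by move: (e'm i); rewrite mz ?hi // leqn0 => /eqP.
  have BX : B (g' * tofrac ('X_[mp'] : P) * u).
    have -> : g' * tofrac ('X_[mp'] : P) * u = g' * tofrac (Fs p) * u - g' * tofrac (Fs p - 'X_[mp']) * u.
      by rewrite rmorphB /=; ring.
    exact: BB.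
  apply: (IHd' p _ _ mp' lfp mpz g' BX Bg'p); lia.
have [m [lfm [mz pm]]] := phi_xp_inv jp hF.
have := KK _ j (leqnn _) (leqnn _) m lfm mz 1.
rewrite !mul1r; apply.
  exists (xpK Fs j); split; last exact: pm.
  by apply: subal_in; case: (mem_src jp).
rewrite /u mulfV ?xK_neq0 //; have := Bc 1; by rewrite iRE rmorph1.
Qed.

Lemma tgt_closed : closedS (subalg (gens_tgt Fs)).
Proof. by split; [apply: subal_c | apply: subal_D | apply: subal_M]. Qed.

Lemma fwd z : subalg (gens_src Fs) z -> exists w, phi_graph z w /\ subalg (gens_tgt Fs) w.
Proof.
move=> sz; apply: (@subal_ind _ _ (gens_src Fs) (fun z => exists w, phi_graph z w /\ subalg (gens_tgt Fs) w) _ _ _ _ z sz).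
- by move=> c; exists (iR n c); split; [apply: phi_c | apply: subal_c].
- move=> a b [w [pa ta]] [w' [pb tb]]; exists (w + w'); split; [exact: phiD | exact: subal_D].
- move=> a b [w [pa ta]] [w' [pb tb]]; exists (w * w'); split; [exact: phiM | exact: subal_M].
move=> i hi; have := mem_nth 0 hi; move/src_inv => [j [jp [-> | ->]]].
  by exists (xK R j); split; [apply: phi_x | apply: subal_in; apply: mem_tgtx].
case: (boolP (involves1 (Fs j))) => hF.
  have [m [_ [mz pm]]] := phi_xp_inv jp hF.
  exists (tofrac ('X_[m] : P) / xK R j); split => //.
  apply: subal_M.
    apply: monoS; [exact: tgt_closed | by move=> k kp; apply: subal_in; apply: mem_tgtx | ].
    by move=> k hk; apply: mz; rewrite hk.
  have -> : (xK R j)^-1 = xminus Fs j by rewrite /xminus hF.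
  by apply: subal_in; apply: mem_tgtm.
exists (xpK Fs j); split; first exact: phi_xp_noinv.
have -> : xpK Fs j = xminus Fs j by rewrite /xminus (negbTE hF).
by apply: subal_in; apply: mem_tgtm.
Qed.

Lemma mainthm (w : K) : (exists z, subalg (gens_src Fs) z /\ phi_graph z w) <-> subalg (gens_tgt Fs) w.
Proof.
split.
  move=> [z [sz pz]]; have [w' [pw' tw']] := fwd sz.
  by rewrite (phi_uniq pz pw').
move=> tw; apply: (@subal_ind _ _ (gens_tgt Fs) B _ _ _ _ w tw).
- exact: Bc.
- exact: BD.
- exact: BM.
move=> i hi; have := mem_nth 0 hi; move/tgt_inv => [j [jp [-> | ->]]].
  exact: Bx.
rewrite /xminus; case: ifP => hF.
  exact: hard.
by apply: Bxp => //; rewrite hF.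
Qed.

End Main.

Theorem lemma4p21 (R : idomainType) (n : nat) (Fs : 'I_n -> {mpoly R[n]}) :
  UFD R -> contains_Z R -> (2 <= n)%N ->
  LP_seed Fs -> cond12 Fs ->
  forall w : {fraction {mpoly R[n]}},
    (exists z, subalg (gens_src Fs) z /\ phi_graph z w) <->
    subalg (gens_tgt Fs) w.
Proof. by move=> _ _ hn _ hc w; apply: mainthm. Qed.
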